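(* Let $n\ge 1$, $k>0$ and $\nu>0$. On the Siegel--Jacobi upper half space $\mathcal{X}^J_n=\{(v,u): v\in M(n,\mathbb{C}),\ v=v^t,\ \Im v>0,\ u\in M(1,n,\mathbb{C})\}$ let $\omega_{\mathcal{X}^J_n}$ be the two-form (the image under the partial Cayley transform of the invariant Kähler two-form of the Siegel--Jacobi ball $\mathcal{D}^J_n$) given by $$-\mathrm{i}\,\omega_{\mathcal{X}^J_n}(v,u)=\frac{k}{2}\operatorname{tr}(H\wedge\bar H)+\frac{2\nu}{\mathrm{i}}\operatorname{tr}(G^tD\wedge\bar G),\qquad D:=(\bar v-v)^{-1},\quad H:=D\,\mathrm{d}v,\quad G^t:=\mathrm{d}u-p\,\mathrm{d}v,$$ where $p:=(u-\bar u)(v-\bar v)^{-1}\in M(1,n,\mathbb{R})$. Introduce real coordinates $(x,y,p,q)$ by $v=x+\mathrm{i}y$ with $x,y$ real symmetric $n\times n$ matrices, $y$ positive definite, and $u=pv+q$ with $p,q\in M(1,n,\mathbb{R})$ (so that $G^t=\mathrm{d}p\,(x+\mathrm{i}y)+\mathrm{d}q$). Then $$\omega_{\mathcal{X}^J_n}(x,y,p,q)=\omega_1+\omega_2,$$ where $$\omega_1=\frac{k}{4}\operatorname{tr}\big(y^{-1}\mathrm{d}x\wedge y^{-1}\mathrm{d}y\big)=-\frac{k}{4}\operatorname{tr}\big(\mathrm{d}x\wedge \mathrm{d}(y^{-1})\big),\qquad \omega_2=2\nu\,\mathrm{d}q^t\wedge\mathrm{d}p=\sum_{i=1}^n \mathrm{d}(2\nu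 q_i)\wedge \mathrm{d}p_i .$$ Moreover, $\omega_1$ is in Darboux form $$\omega_1=\sum_{a=1}^n \mathrm{d}\Big(\tfrac{k}{4}x_{aa}\Big)\wedge \mathrm{d}\big(-(y^{-1})_{aa}\big)+\sum_{1\le a<b\le n}\mathrm{d}\Big(\tfrac{k}{2}x_{ab}\Big)\wedge \mathrm{d}\big(-(y^{-1})_{ab}\big),$$ so that $\omega_{\mathcal{X}^J_n}=\sum_{I=1}^{n(n+3)/2}\mathrm{d}Q^I\wedge\mathrm{d}P^I$ with the $n(n+1)/2$ pairs $(Q^I,P^I)$ equal to $(\tfrac{k}{4}x_{aa},-(y^{-1})_{aa})$, $(\tfrac{k}{2}x_{ab},-(y^{-1})_{ab})$ ($a<b$), together with the $n$ pairs $(2\nu q_i,p_i)$.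
   Context: Matrix-valued differential forms are multiplied using matrix multiplication combined with the wedge product of their entries; $\operatorname{tr}$ is the trace; $\bar{\ }$ denotes complex conjugation and $G=(G^t)^t$ is the column of one-forms corresponding to the row $G^t$. The parameters $k$ (with $2k\in\mathbb{N}$) and $\nu>0$ index, respectively, the holomorphic discrete series of $\mathrm{Sp}(n,\mathbb{R})$ and the representations of the Heisenberg group; here they are just positive constants. *)

(* Defs.v *)
From HB Require Import structures.
From mathcomp Require Import all_boot all_order all_algebra.
From mathcomp Require Import complex.
From mathcomp Require Import all_classical all_reals all_analysis.
Set Implicit Arguments. Unset Strict Implicit. Unset Printing Implicit Defensive.
Import Order.TTheory GRing.Theory Num.Theory.
Local Open Scope ring_scope.
Local Open Scope complex_scope.

Section SiegelJacobi.
Variables (R : realType) (n : nat).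
Local Notation C := (R[i]).

(* A point (x, y, p, q) of the real coordinate chart of X^J_n, and also a
   tangent vector (dx, dy, dp, dq) at such a point. *)
Record pt := Pt { px : 'M[R]_n; py : 'M[R]_n; pp : 'rV[R]_n; pq : 'rV[R]_n }.

Definition padd (P Q : pt) : pt :=
  Pt (px P + px Q) (py P + py Q) (pp P + pp Q) (pq P + pq Q).
Definition pscale (t : R) (P : pt) : pt :=
  Pt (t *: px P) (t *: py P) (t *: pp P) (t *: pq P).

Definition sym_mx (a : 'M[R]_n) := a^T = a.
Definition posdef_mx (a : 'M[R]_n) :=
  sym_mx a /\ forall z : 'rV[R]_n, z != 0 -> 0 < (z *m a *m z^T) 0 0.
Definition in_domain (P : pt) := sym_mx (px P) /\ posdef_mx (py P).
Definition tangent (X : pt) := sym_mx (px X) /\ sym_mx (py X).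

(* Exterior derivative of a real function f of the point, evaluated on
   the tangent vector X at the point P (directional derivative). *)
Definition dR (f : pt -> R) (P X : pt) : R :=
  derive1 (fun t : R => f (padd P (pscale t X))) 0.
Definition dM a b (F : pt -> 'M[R]_(a, b)) (P X : pt) : 'M[R]_(a, b) :=
  \matrix_(i, j) dR (fun Q => F Q i j) P X.
Definition dC a b (F : pt -> 'M[C]_(a, b)) (P X : pt) : 'M[C]_(a, b) :=
  \matrix_(i, j) ((dR (fun Q => complex.Re (F Q i j)) P X)%:C
                  + 'i * (dR (fun Q => complex.Im (F Q i j)) P X)%:C).

(* Wedge product of matrix valued one-forms (matrix multiplication combined
   with the wedge product of entries, alpha^beta(X,Y)=a(X)b(Y)-a(Y)b(X)). *)
Definition mwedge (K : pzRingType) a b c (A : pt -> 'M[K]_(a, b))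
  (B : pt -> 'M[K]_(b, c)) (X Y : pt) : 'M[K]_(a, c) :=
  A X *m B Y - A Y *m B X.
Definition swedge (A B : pt -> R) (X Y : pt) : R := A X * B Y - A Y * B X.

Definition cmx a b (m : 'M[R]_(a, b)) : 'M[C]_(a, b) := map_mx (fun r => r%:C) m.
Definition conjmx a b (m : 'M[C]_(a, b)) : 'M[C]_(a, b) := map_mx conjc m.

Definition vC (P : pt) : 'M[C]_n := cmx (px P) + 'i *: cmx (py P).
Definition uC (P : pt) : 'rV[C]_n := cmx (pp P) *m vC P + cmx (pq P).

Section Omega.
Variables (k nu : R) (P : pt).
Definition Dmx : 'M[C]_n := invmx (conjmx (vC P) - vC P).
Definition Hform (X : pt) : 'M[C]_n := Dmx *m dC vC P X.
Definition Hbar (X : pt) : 'M[C]_n := conjmx (Hform X).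
Definition pcoord : 'rV[C]_n :=
  (uC P - conjmx (uC P)) *m invmx (vC P - conjmx (vC P)).
Definition Gt (X : pt) : 'rV[C]_n := dC uC P X - pcoord *m dC vC P X.
Definition GtD (X : pt) : 'rV[C]_n := Gt X *m Dmx.
Definition Gbar (X : pt) : 'cV[C]_n := (conjmx (Gt X))^T.

Definition minus_i_omega (X Y : pt) : C :=
  (k / 2)%:C * \tr (mwedge Hform Hbar X Y)
  + (2 * nu)%:C / 'i * \tr (mwedge GtD Gbar X Y).
Definition omegaXJ (X Y : pt) : C := 'i * minus_i_omega X Y.

Definition dx := dM px P.
Definition dy := dM py P.
Definition dp := dM pp P.
Definition dq := dM pq P.
Definition dyinv := dM (fun Q => invmx (py Q)) P.

Definition omega1 (X Y : pt) : R :=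
  k / 4 * \tr (mwedge (fun Z => invmx (py P) *m dx Z)
                       (fun Z => invmx (py P) *m dy Z) X Y).
Definition omega1' (X Y : pt) : R := - (k / 4) * \tr (mwedge dx dyinv X Y).
(* 2 nu dq^t ^ dp, read as the trace of the (n x n) matrix-valued 2-form *)
Definition omega2 (X Y : pt) : R :=
  2 * nu * \tr (mwedge (fun Z => (dq Z)^T) dp X Y).
Definition omega2_sum (X Y : pt) : R :=
  \sum_(i < n) swedge (dR (fun Q => 2 * nu * pq Q 0 i) P)
                      (dR (fun Q => pp Q 0 i) P) X Y.
Definition omega1_darboux (X Y : pt) : R :=
  \sum_(a < n) swedge (dR (fun Q => k / 4 * px Q a a) P)
                      (dR (fun Q => - (invmx (py Q)) a a) P) X Y
  + \sum_(a < n) \sum_(b < n | (a < b)%N)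
      swedge (dR (fun Q => k / 2 * px Q a b) P)
             (dR (fun Q => - (invmx (py Q)) a b) P) X Y.
End Omega.
End SiegelJacobi.

(* Main.v *)
Require Import Defs.
From HB Require Import structures.
From mathcomp Require Import all_boot all_order all_algebra.
From mathcomp Require Import complex.
From mathcomp Require Import all_classical all_reals all_analysis.
From mathcomp Require Import ring.
Import Order.TTheory GRing.Theory Num.Theory.
Local Open Scope ring_scope.
Local Open Scope complex_scope.

Section Helpers.
Variable R : realType.

Lemma derive1_quad (f : R -> R) a b c :
  (forall t, f t = a + t * b + t * t * c) -> derive1 f 0 = b.
Proof.
move=> hf.
have -> : f = horner (a%:P + 'X * b%:P + 'X * 'X * c%:P).
  by apply/funext => t; rewrite hf !hornerE.
rewrite derive1E derive_val.
rewrite !(derivD, derivM, derivC, derivX) !hornerE.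
by change (b + 0 + 0 = b); rewrite !addr0.
Qed.

Lemma Re_lin (z w u : R[i]) (t s : R) :
  complex.Re (z + t%:C * w + s%:C * u) = complex.Re z + t * complex.Re w + s * complex.Re u.
Proof. case: z w u => a b [c d] [e f] /=; ring. Qed.
Lemma Im_lin (z w u : R[i]) (t s : R) :
  complex.Im (z + t%:C * w + s%:C * u) = complex.Im z + t * complex.Im w + s * complex.Im u.
Proof. case: z w u => a b [c d] [e f] /=; ring. Qed.

Lemma quad_expand (K : comNzRingType) a b c (s : K) (A B : 'M[K]_(a,b)) (C D : 'M[K]_(b,c)) (E F : 'M[K]_(a,c)) :
  (A + s *: B) *m (C + s *: D) + (E + s *: F) =
  (A *m C + E) + s *: (B *m C + A *m D + F) + (s * s) *: (B *m D).
Proof.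
rewrite mulmxDl !mulmxDr -!scalemxAl -!scalemxAr !scalerDr !scalerA.
apply/matrixP => i j; rewrite !mxE; ring.
Qed.

Variable n : nat.
Implicit Types P X : pt R n.

Lemma dM_quad a b (F : pt R n -> 'M[R]_(a,b)) P X A B C :
  (forall t, F (padd P (pscale t X)) = A + t *: B + (t*t) *: C) -> dM F P X = B.
Proof.
move=> h; apply/matrixP=> i j; rewrite mxE /dR; apply: derive1_quad => t.
by rewrite h !mxE.
Qed.

Lemma dC_quad a b (F : pt R n -> 'M[R[i]]_(a,b)) P X A B C :
  (forall t, F (padd P (pscale t X)) = A + t%:C *: B + (t*t)%:C *: C) -> dC F P X = B.
Proof.
move=> h; apply/matrixP=> i j; rewrite mxE /dR.
rewrite (@derive1_quad _ (complex.Re (A i j)) (complex.Re (B i j)) (complex.Re (C i j))); last first.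
  by move=> t; rewrite h !mxE Re_lin.
rewrite (@derive1_quad _ (complex.Im (A i j)) (complex.Im (B i j)) (complex.Im (C i j))); last first.
  by move=> t; rewrite h !mxE Im_lin.
by rewrite -complexE.
Qed.

Lemma cmxE a b (A : 'M[R]_(a,b)) : cmx A = map_mx (real_complex R) A.
Proof. by []. Qed.
Lemma cjE a b (A : 'M[R[i]]_(a,b)) : Defs.conjmx A = map_mx conjc A.
Proof. by []. Qed.
Section CMX.
Variables a b c : nat.
Lemma cmxD (A B : 'M[R]_(a,b)) : cmx (A + B) = cmx A + cmx B.
Proof. by rewrite !cmxE map_mxD. Qed.
Lemma cmxB (A B : 'M[R]_(a,b)) : cmx (A - B) = cmx A - cmx B.
Proof. by rewrite !cmxE map_mxB. Qed.
Lemma cmxN (A : 'M[R]_(a,b)) : cmx (- A) = - cmx A.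
Proof. by rewrite !cmxE map_mxN. Qed.
Lemma cmxZ t (A : 'M[R]_(a,b)) : cmx (t *: A) = t%:C *: cmx A.
Proof. by rewrite !cmxE map_mxZ. Qed.
Lemma cmxM (A : 'M[R]_(a,b)) (B : 'M[R]_(b,c)) : cmx (A *m B) = cmx A *m cmx B.
Proof. by rewrite !cmxE map_mxM. Qed.
Lemma cmxT (A : 'M[R]_(a,b)) : cmx (A^T) = (cmx A)^T.
Proof. by rewrite !cmxE map_trmx. Qed.
Lemma cj_cmx (A : 'M[R]_(a,b)) : Defs.conjmx (cmx A) = cmx A.
Proof. by apply/matrixP => i j; rewrite !mxE conjc_real. Qed.
Lemma cjD (A B : 'M[R[i]]_(a,b)) : Defs.conjmx (A + B) = Defs.conjmx A + Defs.conjmx B.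
Proof. by rewrite !cjE map_mxD. Qed.
Lemma cjB (A B : 'M[R[i]]_(a,b)) : Defs.conjmx (A - B) = Defs.conjmx A - Defs.conjmx B.
Proof. by rewrite !cjE map_mxB. Qed.
Lemma cjZ t (A : 'M[R[i]]_(a,b)) : Defs.conjmx (t *: A) = t^* *: Defs.conjmx A.
Proof. by rewrite !cjE map_mxZ. Qed.
Lemma cjM (A : 'M[R[i]]_(a,b)) (B : 'M[R[i]]_(b,c)) :
  Defs.conjmx (A *m B) = Defs.conjmx A *m Defs.conjmx B.
Proof. by rewrite !cjE map_mxM. Qed.
Lemma cjT (A : 'M[R[i]]_(a,b)) : Defs.conjmx (A^T) = (Defs.conjmx A)^T.
Proof. by rewrite !cjE map_trmx. Qed.
End CMX.
Lemma cmx_tr (A : 'M[R]_n) : \tr (cmx A) = (\tr A)%:C.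
Proof. by rewrite /mxtrace rmorph_sum; apply: eq_bigr => i _; rewrite mxE. Qed.
Lemma cmx_inv (A : 'M[R]_n) : invmx (cmx A) = cmx (invmx A).
Proof. by rewrite !cmxE map_invmx. Qed.

Lemma dx_val P X : dx P X = px X.
Proof. by apply: (@dM_quad _ _ _ _ _ (px P) _ 0) => t; rewrite scaler0 addr0. Qed.
Lemma dy_val P X : dy P X = py X.
Proof. by apply: (@dM_quad _ _ _ _ _ (py P) _ 0) => t; rewrite scaler0 addr0. Qed.
Lemma dp_val P X : dp P X = pp X.
Proof. by apply: (@dM_quad _ _ _ _ _ (pp P) _ 0) => t; rewrite scaler0 addr0. Qed.
Lemma dq_val P X : dq P X = pq X.
Proof. by apply: (@dM_quad _ _ _ _ _ (pq P) _ 0) => t; rewrite scaler0 addr0. Qed.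

Definition dvC X : 'M[R[i]]_n := cmx (px X) + 'i *: cmx (py X).

Lemma vC_lin P X t : vC (padd P (pscale t X)) = vC P + t%:C *: dvC X.
Proof.
rewrite /vC /dvC /=; apply/matrixP => i j; rewrite !mxE.
rewrite !(rmorphD, rmorphM) /=; ring.
Qed.

Lemma dvC_val P X : dC (@vC R n) P X = dvC X.
Proof.
apply: (@dC_quad _ _ _ _ _ (vC P) _ 0) => t.
by rewrite scaler0 addr0 vC_lin.
Qed.

Lemma duC_val P X :
  dC (@uC R n) P X = cmx (pp X) *m vC P + cmx (pp P) *m dvC X + cmx (pq X).
Proof.
apply: (@dC_quad _ _ _ _ _ (uC P) _ (cmx (pp X) *m dvC X)) => t.
rewrite /uC vC_lin /= !cmxD !cmxZ.
have := @quad_expand R[i] 1 n n t%:C (cmx (pp P)) (cmx (pp X)) (vC P) (dvC X) (cmx (pq P)) (cmx (pq X)).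
move=> H. rewrite rmorphM; exact: H.
Qed.
End Helpers.

Section Inv.
Variable R : realType.
Variable n : nat.

Lemma near_neq0 (p : {poly R}) : p.[0] != 0 -> \forall t \near 0, p.[t] != 0.
Proof.
move=> p0; exact: (cvgr_neq0 _ (@continuous_horner R p 0) p0).
Qed.

Definition Mp (y Y : 'M[R]_n) : 'M[{poly R}]_n :=
  \matrix_(a, b) ((y a b)%:P + 'X * (Y a b)%:P).

Lemma MpE (y Y : 'M[R]_n) t : map_mx (horner_eval t) (Mp y Y) = y + t *: Y.
Proof. by apply/matrixP => a b; rewrite !mxE /horner_eval !hornerE mulrC. Qed.

Lemma Mp_det (y Y : 'M[R]_n) t : \det (y + t *: Y) = (\det (Mp y Y)).[t].
Proof. by rewrite -MpE det_map_mx. Qed.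

Lemma Mp_adj (y Y : 'M[R]_n) t : \adj (y + t *: Y) = map_mx (horner_eval t) (\adj (Mp y Y)).
Proof. by rewrite map_mx_adj MpE. Qed.

Lemma inv_derivable (y Y : 'M[R]_n) i j : y \in unitmx ->
  derivable (fun t : R => invmx (y + t *: Y) i j) 0 1.
Proof.
move=> yu.
have d0 : (\det (Mp y Y)).[0] != 0.
  by rewrite -Mp_det scale0r addr0 -unitfE -unitmxE.
have hd : derivable (fun t : R => (\adj (Mp y Y) i j).[t] * ((\det (Mp y Y)).[t])^-1) 0 1.
  apply: derivableM; first exact: derivable_horner.
  by apply: derivableV => //; exact: derivable_horner.
apply: near_eq_derivable hd.
near=> t.
have ht : (\det (Mp y Y)).[t] != 0 by near: t; exact: near_neq0.
rewrite /invmx unitmxE unitfE Mp_det ht /= mxE Mp_adj mxE /horner_eval mulrC.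
by rewrite !mxE.
Unshelve. all: by end_near.
Qed.

Lemma inv_derive (y Y : 'M[R]_n) : y \in unitmx ->
  \matrix_(i, j) derive1 (fun t : R => invmx (y + t *: Y) i j) 0
  = - (invmx y *m Y *m invmx y).
Proof.
move=> yu.
set D := \matrix_(i, j) _.
have gD i j : is_derive (0:R) 1 (fun t : R => invmx (y + t *: Y) i j) (D i j).
  by rewrite mxE derive1E; apply/derivableP/inv_derivable.
have fD i l : is_derive (0:R) 1 (fun t : R => y i l + t * Y i l) (Y i l).
  have E : (fun t : R => y i l + t * Y i l) = horner ((y i l)%:P + 'X * (Y i l)%:P).
    by apply/funext => t; rewrite !hornerE.
  apply: DeriveDef; first by rewrite E; exact: derivable_horner.
  rewrite -derive1E; apply: (@derive1_quad _ _ (y i l) (Y i l) 0) => t.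
  by rewrite mulr0 addr0.
have key i j : \sum_(l < n) (Y i l * invmx y l j + y i l * D l j) = 0.
  have hs := is_derive_sum (fun l => is_deriveM (fD i l) (gD l j)).
  have hc : is_derive (0:R) 1 (cst (1%:M i j : R)) (\sum_(l < n)
     ((y i l + 0 * Y i l) *: D l j + invmx (y + 0 *: Y) l j *: Y i l)).
    apply: near_eq_is_derive hs.
    near=> t.
    have ht : (\det (Mp y Y)).[t] != 0.
      near: t; apply: near_neq0.
      by rewrite -Mp_det scale0r addr0 -unitfE -unitmxE.
    have tu : y + t *: Y \in unitmx by rewrite unitmxE unitfE Mp_det.
    rewrite fct_sumE /= -(mulmxV tu) mxE.
    by apply: eq_bigr => l _; rewrite !mxE.
  have := derive_val (is_derive := hc).
  rewrite derive_cst => /esym.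
  rewrite scale0r addr0.
  under eq_bigr do rewrite mul0r addr0.
  move=> H; rewrite -[RHS]H; apply: eq_bigr => l _.
  by change (Y i l * invmx y l j + y i l * D l j = y i l * D l j + invmx y l j * Y i l); rewrite addrC [Y i l * _]mulrC.
have E : Y *m invmx y + y *m D = 0.
  by apply/matrixP => i j; rewrite !mxE -big_split /= key.
move/eqP: E; rewrite addrC addr_eq0 => /eqP E.
by rewrite -(mulKmx yu D) E mulmxN mulmxA.
Unshelve. all: by end_near.
Qed.

End Inv.

Section Main.
Variable R : realType.
Variable n : nat.
Implicit Types P X : pt R n.

Definition c0 : R[i] := 'i * (2^-1)%:C.
Definition c2 : R[i] := - (2%:R * 'i).

Lemma conj_i : ('i : R[i])^* = - 'i.
Proof. by apply/eqP; rewrite eq_complex /= oppr0 !eqxx. Qed.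
Lemma conj_iZ a b (A : 'M[R[i]]_(a,b)) : Defs.conjmx ('i *: A) = (- 'i) *: Defs.conjmx A.
Proof. by apply/matrixP => i j; rewrite !mxE; case: (A i j) => a0 b0; apply/eqP; rewrite eq_complex /=; apply/andP; split; apply/eqP; ring. Qed.

Lemma c2c0 : c2 * c0 = 1.
Proof.
rewrite /c2 /c0 -(rmorph_nat (real_complex R)) /real_complex_def.
simpc. apply/eqP; rewrite eq_complex /=; apply/andP; split; apply/eqP; by field.
Qed.

Lemma c2inv : c2^-1 = c0.
Proof. exact: mulr1_eq c2c0. Qed.

Lemma c2unit : c2 \is a GRing.unit.
Proof.
rewrite unitfE; apply/eqP => h; move: c2c0; rewrite h mul0r => /eqP.
by rewrite eq_sym oner_eq0.
Qed.

Lemma posdef_unit (y : 'M[R]_n) : posdef_mx y -> y \in unitmx.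
Proof.
case=> _ hp; rewrite unitmxE unitfE; apply/negP => /det0P [v v0 vy].
by have := hp v v0; rewrite vy mul0mx mxE ltxx.
Qed.

Lemma conj_vC P : Defs.conjmx (vC P) = cmx (px P) + (- 'i) *: cmx (py P).
Proof. by rewrite /vC cjD conj_iZ !cj_cmx. Qed.

Lemma W_val P : Defs.conjmx (vC P) - vC P = c2 *: cmx (py P).
Proof. rewrite conj_vC /vC /c2; apply/matrixP => i j; rewrite !mxE; ring. Qed.

Lemma Dmx_val P : py P \in unitmx -> Dmx P = c0 *: cmx (invmx (py P)).
Proof.
move=> yu; rewrite /Dmx W_val invmxZ; first by rewrite c2inv cmx_inv.
by rewrite unitmxZ ?c2unit // cmxE map_unitmx.
Qed.

Lemma pcoord_val P : py P \in unitmx -> pcoord P = cmx (pp P).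
Proof.
move=> yu; rewrite /pcoord.
have E1 : uC P - Defs.conjmx (uC P) = cmx (pp P) *m (vC P - Defs.conjmx (vC P)).
  rewrite /uC cjD cjM !cj_cmx mulmxBr.
  by rewrite opprD addrACA subrr addr0.
have E2 : vC P - Defs.conjmx (vC P) = (- c2) *: cmx (py P).
  by rewrite conj_vC /vC /c2; apply/matrixP => i j; rewrite !mxE; ring.
by rewrite E1 E2 mulmxK // unitmxZ ?cmxE ?map_unitmx // unitrN c2unit.
Qed.

Lemma Hform_val P X : py P \in unitmx ->
  Hform P X = c0 *: (cmx (invmx (py P) *m px X) + 'i *: cmx (invmx (py P) *m py X)).
Proof.
move=> yu; rewrite /Hform Dmx_val // dvC_val /dvC !cmxM.
by rewrite -scalemxAl mulmxDr scalemxAr.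
Qed.

Lemma Hbar_val P X : py P \in unitmx ->
  Hbar P X = c0^* *: (cmx (invmx (py P) *m px X) + (- 'i) *: cmx (invmx (py P) *m py X)).
Proof. by move=> yu; rewrite /Hbar Hform_val // cjZ cjD conj_iZ !cj_cmx. Qed.

Lemma Gt_val P X : py P \in unitmx ->
  Gt P X = cmx (pp X *m px P + pq X) + 'i *: cmx (pp X *m py P).
Proof.
move=> yu; rewrite /Gt duC_val dvC_val pcoord_val // addrAC addrK.
by rewrite /vC mulmxDr -scalemxAr cmxD !cmxM addrAC.
Qed.

Lemma GtD_val P X : py P \in unitmx ->
  GtD P X = c0 *: (cmx ((pp X *m px P + pq X) *m invmx (py P))
                   + 'i *: cmx ((pp X *m py P) *m invmx (py P))).
Proof.
move=> yu; rewrite /GtD Gt_val // Dmx_val // -scalemxAr; congr (_ *: _).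
by rewrite [LHS]mulmxDl -scalemxAl -!cmxM.
Qed.

Lemma Gbar_val P X : py P \in unitmx ->
  Gbar P X = 1 *: (cmx (pp X *m px P + pq X)^T + (- 'i) *: cmx (pp X *m py P)^T).
Proof.
move=> yu; rewrite /Gbar Gt_val // cjD conj_iZ !cj_cmx scale1r.
by rewrite linearD linearZ /= !cmxT.
Qed.

Lemma tr_expand m l (a b a' b' : R[i]) (A B : 'M[R[i]]_(m,l)) (A' B' : 'M[R[i]]_(l,m)) :
  \tr ((a *: (A + b *: B)) *m (a' *: (A' + b' *: B'))) =
  a * a' * (\tr (A *m A') + b' * \tr (A *m B') + b * \tr (B *m A') + b * b' * \tr (B *m B')).
Proof.
rewrite -scalemxAl -scalemxAr !mxtraceZ mulmxDl !mulmxDr -!scalemxAl -!scalemxAr.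
rewrite !mxtraceD !mxtraceZ; ring.
Qed.

Lemma trB m (A B : 'M[R[i]]_m) : \tr (A - B) = \tr A - \tr B.
Proof. by rewrite linearB. Qed.

End Main.

Section Main.
Variable R : realType.
Variable n : nat.
Implicit Types P X : pt R n.

Definition rtr {m} (M : 'M[R]_m) := \tr M.

Lemma tr_part m l (a b a' b' : R[i]) (A B : 'M[R]_(m,l)) (A' B' : 'M[R]_(l,m)) :
  \tr ((a *: (cmx A + b *: cmx B)) *m (a' *: (cmx A' + b' *: cmx B'))) =
  a * a' * ((rtr (A *m A'))%:C + b' * (rtr (A *m B'))%:C + b * (rtr (B *m A'))%:C
            + b * b' * (rtr (B *m B'))%:C).
Proof. by rewrite tr_expand -!cmxM !cmx_tr. Qed.

Lemma mwedgeE a b c (A : pt R n -> 'M[R[i]]_(a,b)) (B : pt R n -> 'M[R[i]]_(b,c)) X Y :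
  mwedge A B X Y = A X *m B Y - A Y *m B X.
Proof. Time exact: erefl. Time Qed.

Lemma Htr P X Y : py P \in unitmx ->
  \tr (mwedge (Hform P) (Hbar P) X Y) = c0 R * (c0 R)^* * (2%:R * 'i) * ((rtr ((invmx (py P) *m px Y) *m (invmx (py P) *m py X)))%:C - (rtr ((invmx (py P) *m px X) *m (invmx (py P) *m py Y)))%:C).
Proof.
move=> yu.
have h1 : \tr (Hform P X *m Hbar P Y) = c0 R * (c0 R)^* * ((rtr ((invmx (py P) *m px X) *m (invmx (py P) *m px Y)))%:C + (- 'i) * (rtr ((invmx (py P) *m px X) *m (invmx (py P) *m py Y)))%:C + 'i * (rtr ((invmx (py P) *m py X) *m (invmx (py P) *m px Y)))%:C + 'i * (- 'i) * (rtr ((invmx (py P) *m py X) *m (invmx (py P) *m py Y)))%:C).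
  by rewrite Hform_val // Hbar_val // tr_part.
have h2 : \tr (Hform P Y *m Hbar P X) = c0 R * (c0 R)^* * ((rtr ((invmx (py P) *m px Y) *m (invmx (py P) *m px X)))%:C + (- 'i) * (rtr ((invmx (py P) *m px Y) *m (invmx (py P) *m py X)))%:C + 'i * (rtr ((invmx (py P) *m py Y) *m (invmx (py P) *m px X)))%:C + 'i * (- 'i) * (rtr ((invmx (py P) *m py Y) *m (invmx (py P) *m py X)))%:C).
  by rewrite Hform_val // Hbar_val // tr_part.
have e1 : (rtr ((invmx (py P) *m px Y) *m (invmx (py P) *m px X))) = (rtr ((invmx (py P) *m px X) *m (invmx (py P) *m px Y))) := mxtrace_mulC _ _.
have e2 : (rtr ((invmx (py P) *m py Y) *m (invmx (py P) *m py X))) = (rtr ((invmx (py P) *m py X) *m (invmx (py P) *m py Y))) := mxtrace_mulC _ _.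
have e3 : (rtr ((invmx (py P) *m py X) *m (invmx (py P) *m px Y))) = (rtr ((invmx (py P) *m px Y) *m (invmx (py P) *m py X))) := mxtrace_mulC _ _.
have e4 : (rtr ((invmx (py P) *m py Y) *m (invmx (py P) *m px X))) = (rtr ((invmx (py P) *m px X) *m (invmx (py P) *m py Y))) := mxtrace_mulC _ _.
have H0 := etrans (@trB R n _ _) (f_equal2 (fun a b => a - b) h1 h2).
apply: (etrans H0).
Time rewrite e1 e2 e3 e4.
move: (rtr ((invmx (py P) *m px X) *m (invmx (py P) *m px Y))) (rtr ((invmx (py P) *m py X) *m (invmx (py P) *m py Y))) (rtr ((invmx (py P) *m px Y) *m (invmx (py P) *m py X))) (rtr ((invmx (py P) *m px X) *m (invmx (py P) *m py Y))) => t1 t2 t3 t4.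
Time rewrite -(rmorph_nat (real_complex R)); ring.
Time Qed.
Lemma Gtr P X Y : sym_mx (px P) -> sym_mx (py P) -> py P \in unitmx ->
  \tr (mwedge (GtD P) (Gbar P) X Y) = c0 R * (2%:R * 'i) * ((rtr ((pq Y *m (pp X)^T)))%:C - (rtr ((pq X *m (pp Y)^T)))%:C).
Proof.
move=> xs ys yu.
have h1 : \tr (GtD P X *m Gbar P Y) = c0 R * 1 * ((rtr (((pp X *m px P + pq X) *m invmx (py P)) *m (pp Y *m px P + pq Y)^T))%:C + (- 'i) * (rtr (((pp X *m px P + pq X) *m invmx (py P)) *m (pp Y *m py P)^T))%:C + 'i * (rtr (((pp X *m py P) *m invmx (py P)) *m (pp Y *m px P + pq Y)^T))%:C + 'i * (- 'i) * (rtr (((pp X *m py P) *m invmx (py P)) *m (pp Y *m py P)^T))%:C).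
  by rewrite GtD_val // Gbar_val // tr_part.
have h2 : \tr (GtD P Y *m Gbar P X) = c0 R * 1 * ((rtr (((pp Y *m px P + pq Y) *m invmx (py P)) *m (pp X *m px P + pq X)^T))%:C + (- 'i) * (rtr (((pp Y *m px P + pq Y) *m invmx (py P)) *m (pp X *m py P)^T))%:C + 'i * (rtr (((pp Y *m py P) *m invmx (py P)) *m (pp X *m px P + pq X)^T))%:C + 'i * (- 'i) * (rtr (((pp Y *m py P) *m invmx (py P)) *m (pp X *m py P)^T))%:C).
  by rewrite GtD_val // Gbar_val // tr_part.
have f1 : (rtr (((pp Y *m px P + pq Y) *m invmx (py P)) *m (pp X *m px P + pq X)^T)) = (rtr (((pp X *m px P + pq X) *m invmx (py P)) *m (pp Y *m px P + pq Y)^T)).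
  by rewrite /rtr -mxtrace_tr !trmx_mul trmxK trmx_inv ys mulmxA.
have f2 : (rtr (((pp Y *m py P) *m invmx (py P)) *m (pp X *m py P)^T)) = (rtr (((pp X *m py P) *m invmx (py P)) *m (pp Y *m py P)^T)).
  by rewrite /rtr -mxtrace_tr trmx_mul trmxK trmx_mul trmx_inv ys mulmxA.
have f3 : (rtr (((pp X *m px P + pq X) *m invmx (py P)) *m (pp Y *m py P)^T)) = (rtr (pp X *m px P *m (pp Y)^T)) + (rtr ((pq X *m (pp Y)^T))).
  by rewrite /rtr trmx_mul ys -mulmxA (mulmxA (invmx (py P))) mulVmx // mul1mx mulmxDl mxtraceD.
have f4 : (rtr (((pp Y *m px P + pq Y) *m invmx (py P)) *m (pp X *m py P)^T)) = (rtr (pp Y *m px P *m (pp X)^T)) + (rtr ((pq Y *m (pp X)^T))).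
  by rewrite /rtr trmx_mul ys -mulmxA (mulmxA (invmx (py P))) mulVmx // mul1mx mulmxDl mxtraceD.
have f5 : (rtr (((pp X *m py P) *m invmx (py P)) *m (pp Y *m px P + pq Y)^T)) = (rtr (pp X *m px P *m (pp Y)^T)) + (rtr (pp X *m (pq Y)^T)).
  by rewrite /rtr -(mulmxA (pp X)) mulmxV // mulmx1 linearD /= trmx_mul xs mulmxDr mxtraceD mulmxA.
have f6 : (rtr (((pp Y *m py P) *m invmx (py P)) *m (pp X *m px P + pq X)^T)) = (rtr (pp Y *m px P *m (pp X)^T)) + (rtr (pp Y *m (pq X)^T)).
  by rewrite /rtr -(mulmxA (pp Y)) mulmxV // mulmx1 linearD /= trmx_mul xs mulmxDr mxtraceD mulmxA.
have s1 : (rtr (pp X *m (pq Y)^T)) = (rtr ((pq Y *m (pp X)^T))).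
  by rewrite /rtr -mxtrace_tr trmx_mul trmxK.
have s2 : (rtr (pp Y *m (pq X)^T)) = (rtr ((pq X *m (pp Y)^T))).
  by rewrite /rtr -mxtrace_tr trmx_mul trmxK.
have H0 := etrans (@trB R 1 _ _) (f_equal2 (fun a b => a - b) h1 h2).
apply: (etrans H0).
rewrite f1 f2 f3 f4 f5 f6 s1 s2.
move: (rtr (((pp X *m px P + pq X) *m invmx (py P)) *m (pp Y *m px P + pq Y)^T)) (rtr (((pp X *m py P) *m invmx (py P)) *m (pp Y *m py P)^T)) (rtr (pp X *m px P *m (pp Y)^T)) (rtr (pp Y *m px P *m (pp X)^T)) (rtr ((pq Y *m (pp X)^T))) (rtr ((pq X *m (pp Y)^T))) => t1 t2 t3 t4 t5 t6.
rewrite -(rmorph_nat (real_complex R)); ring.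
Qed.
Lemma om1 k P X Y : omega1 k P X Y =
  k / 4 * (rtr ((invmx (py P) *m px X) *m (invmx (py P) *m py Y))
           - rtr ((invmx (py P) *m px Y) *m (invmx (py P) *m py X))).
Proof. Time rewrite /omega1 /mwedge /= !dx_val !dy_val /rtr linearB. by []. Qed.

Lemma om2 nu P X Y : omega2 nu P X Y =
  2 * nu * (rtr (pq X *m (pp Y)^T) - rtr (pq Y *m (pp X)^T)).
Proof.
Time rewrite /omega2 /mwedge /= !dq_val !dp_val /rtr linearB /=.
by rewrite (mxtrace_mulC (pq X)^T) (mxtrace_mulC (pq Y)^T) -(mxtrace_tr (pp Y *m _)) -(mxtrace_tr (pp X *m _)) !trmx_mul !trmxK.
Qed.

Lemma c0c0 : c0 R * (c0 R)^* = (2^-1 * 2^-1)%:C.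
Proof.
rewrite /c0 /real_complex_def; simpc.
by apply/eqP; rewrite eq_complex /=; apply/andP; split; apply/eqP; ring.
Qed.

Lemma invi : ('i : R[i])^-1 = - 'i.
Proof.
apply: mulr1_eq; rewrite /real_complex_def; simpc.
by apply/eqP; rewrite eq_complex /=; apply/andP; split; apply/eqP; ring.
Qed.

Lemma final_scalar (k nu t1 t2 t3 t4 : R) :
  'i * ((k / 2)%:C * ((2^-1 * 2^-1)%:C * ((2:R)%:C * 'i) * (t1%:C - t2%:C))
        + (2 * nu)%:C * (- 'i) * ('i * (2^-1)%:C * ((2:R)%:C * 'i) * (t3%:C - t4%:C)))
  = (k / 4 * (t2 - t1) + 2 * nu * (t4 - t3))%:C.
Proof.
rewrite /real_complex_def; simpc.
apply/eqP; rewrite eq_complex /=; apply/andP; split; apply/eqP; field.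
all: by [].
Qed.

Lemma main1 k nu P X Y : in_domain P -> tangent X -> tangent Y ->
  omegaXJ k nu P X Y = (omega1 k P X Y + omega2 nu P X Y)%:C.
Proof.
case=> xs [ys yp] _ _.
have yu : py P \in unitmx by apply: posdef_unit.
have L := f_equal2 (fun a b => 'i * ((k / 2)%:C * a + (2 * nu)%:C / 'i * b))
   (Htr P X Y yu) (Gtr P X Y xs ys yu).
apply: (etrans L).
rewrite om1 om2 c0c0 invi /c0.
rewrite -(rmorph_nat (real_complex R)).
move: (rtr _) (rtr _) (rtr _) (rtr _) => t1 t2 t3 t4.
exact: (final_scalar k nu t4 t3 t2 t1).
Qed.

End Main.

Section Rest.
Variable R : realType.
Variable n : nat.
Implicit Types P X : pt R n.
Local Notation rtr := (@rtr R _).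

Lemma dyinv_val P X : py P \in unitmx ->
  dyinv P X = - (invmx (py P) *m py X *m invmx (py P)).
Proof.
move=> yu; rewrite -(@inv_derive R n _ (py X) yu).
by apply/matrixP => i j; rewrite !mxE /dR.
Qed.

Lemma om1' k P X Y : py P \in unitmx -> omega1' k P X Y =
  k / 4 * (rtr ((invmx (py P) *m px X) *m (invmx (py P) *m py Y))
           - rtr ((invmx (py P) *m px Y) *m (invmx (py P) *m py X))).
Proof.
move=> yu; rewrite /omega1' /mwedge /= !dx_val !dyinv_val // /rtr linearB /=.
rewrite !mulmxN !linearN /= !mulmxA.
rewrite (mxtrace_mulC (px X *m invmx (py P) *m py Y)) (mxtrace_mulC (px Y *m invmx (py P) *m py X)) !mulmxA.
ring.
Qed.

Lemma dR_lin (F : pt R n -> R) P X a b :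
  (forall t, F (padd P (pscale t X)) = a + t * b) -> dR F P X = b.
Proof.
move=> h; rewrite /dR; apply: (@derive1_quad _ _ a b 0) => t.
by rewrite h mulr0 addr0.
Qed.

Lemma dR_q nu P X i : dR (fun Q => 2 * nu * pq Q 0 i) P X = 2 * nu * pq X 0 i.
Proof. by apply: (@dR_lin _ _ _ (2 * nu * pq P 0 i)) => t; rewrite /= !mxE; ring. Qed.
Lemma dR_p P X i : dR (fun Q => pp Q 0 i) P X = pp X 0 i.
Proof. by apply: (@dR_lin _ _ _ (pp P 0 i)) => t; rewrite /= !mxE. Qed.
Lemma dR_x c P X a b : dR (fun Q => c * px Q a b) P X = c * px X a b.
Proof. by apply: (@dR_lin _ _ _ (c * px P a b)) => t; rewrite /= !mxE; ring. Qed.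

Lemma dR_ninv P X a b : py P \in unitmx ->
  dR (fun Q => - invmx (py Q) a b) P X = - dyinv P X a b.
Proof.
move=> yu; rewrite /dyinv /dM mxE /dR !derive1E.
apply: (deriveN (f := fun t : R => invmx (py (padd P (pscale t X))) a b)).
exact: (@inv_derivable R n (py P) (py X) a b yu).
Qed.

Lemma om2s nu P X Y : omega2_sum nu P X Y =
  2 * nu * (rtr (pq X *m (pp Y)^T) - rtr (pq Y *m (pp X)^T)).
Proof.
rewrite /omega2_sum /swedge.
under eq_bigr do rewrite !dR_q !dR_p.
rewrite /rtr /mxtrace !big_ord1 !mxE mulrBr !mulr_sumr -sumrB.
by apply: eq_bigr => i _; rewrite !mxE; ring.
Qed.

Lemma sum_sym (F : 'I_n -> 'I_n -> R) : (forall a b, F a b = F b a) ->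
  \sum_(a < n) \sum_(b < n) F a b = \sum_(a < n) F a a + 2 * \sum_(a < n) \sum_(b < n | (a < b)%N) F a b.
Proof.
move=> Fs.
have sp (a : 'I_n) : \sum_(b < n) F a b = F a a + (\sum_(b < n | (a < b)%N) F a b + \sum_(b < n | (b < a)%N) F a b).
  rewrite (bigD1 a) //=; congr (_ + _).
  rewrite (bigID (fun b : 'I_n => (a < b)%N)) /=; congr (_ + _); apply: eq_bigl => b.
    by rewrite -(inj_eq val_inj) /=; case: ltngtP.
  by rewrite -(inj_eq val_inj) /=; case: ltngtP.
rewrite (eq_bigr _ (fun a _ => sp a)) !big_split /=.
have sw : \sum_(a < n) \sum_(b < n | (b < a)%N) F a b = \sum_(a < n) \sum_(b < n | (a < b)%N) F a b.
  rewrite (exchange_big_dep xpredT) //=.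
  by apply: eq_bigr => b _; apply: eq_bigr => a _; exact: Fs.
rewrite sw; ring.
Qed.

Lemma sym_entry (M : 'M[R]_n) a b : sym_mx M -> M b a = M a b.
Proof. by move=> h; rewrite -[in RHS]h mxE. Qed.

Lemma D_sym P X a b : sym_mx (py P) -> sym_mx (py X) -> py P \in unitmx ->
  dyinv P X b a = dyinv P X a b.
Proof.
move=> ys xs yu; rewrite dyinv_val //.
have h : (invmx (py P) *m py X *m invmx (py P))^T = invmx (py P) *m py X *m invmx (py P).
  by rewrite !trmx_mul trmx_inv ys xs mulmxA.
have hs : sym_mx (- (invmx (py P) *m py X *m invmx (py P))) by rewrite /sym_mx linearN /= h.
exact: (sym_entry _ a b hs).
Qed.

Lemma om1d k P X Y : sym_mx (py P) -> py P \in unitmx -> tangent X -> tangent Y ->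
  omega1_darboux k P X Y = omega1' k P X Y.
Proof.
move=> ys yu [axs ays] [bxs bys].
pose F (a b : 'I_n) := px X a b * dyinv P Y b a - px Y a b * dyinv P X b a.
have Fs a b : F a b = F b a.
  by rewrite /F (sym_entry _ b a axs) (sym_entry _ b a bxs) (D_sym _ _ a b ys bys yu) (D_sym _ _ a b ys ays yu).
have E1 : omega1' k P X Y = - (k / 4) * \sum_(a < n) \sum_(b < n) F a b.
  rewrite /omega1' /mwedge /= !dx_val linearB /= /mxtrace -sumrB; congr (_ * _).
  by apply: eq_bigr => a _; rewrite !mxE -sumrB.
have E2 : omega1_darboux k P X Y = \sum_(a < n) (- (k / 4)) * F a a
     + \sum_(a < n) \sum_(b < n | (a < b)%N) (- (k / 2)) * F a b.
  rewrite /omega1_darboux /swedge; congr (_ + _).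
    by apply: eq_bigr => a _; rewrite !dR_x !dR_ninv // /F; ring.
  apply: eq_bigr => a _; apply: eq_bigr => b _.
  by rewrite !dR_x !dR_ninv // /F (D_sym _ _ a b ys bys yu) (D_sym _ _ a b ys ays yu); ring.
rewrite E1 E2 (sum_sym _ Fs) -mulr_sumr.
under [X in _ + X = _]eq_bigr do rewrite -mulr_sumr.
rewrite -mulr_sumr.
rewrite mulrDr mulrA; congr (_ + _); congr (_ * _).
by field.
Qed.

End Rest.

Theorem lemma2 (R : realType) (n : nat) (k nu : R) :
  (0 < n)%N -> 0 < k -> 0 < nu ->
  forall P : pt R n, in_domain P ->
  forall X Y : pt R n, tangent X -> tangent Y ->
    [/\ omegaXJ k nu P X Y = (omega1 k P X Y + omega2 nu P X Y)%:C,
        omega1 k P X Y = omega1' k P X Y,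
        omega2 nu P X Y = omega2_sum nu P X Y,
        omega1 k P X Y = omega1_darboux k P X Y
      & omegaXJ k nu P X Y
        = (omega1_darboux k P X Y + omega2_sum nu P X Y)%:C].

Proof.
move=> _ _ _ P [xs [ys yp]] X Y tX tY.
have yu : py P \in unitmx by apply: (@posdef_unit R n); split.
have h1 := @main1 R n k nu P X Y (conj xs (conj ys yp)) tX tY.
have h2 : omega1 k P X Y = omega1' k P X Y by rewrite om1 om1'.
have h3 : omega2 nu P X Y = omega2_sum nu P X Y by rewrite om2 om2s.
have h4 : omega1 k P X Y = omega1_darboux k P X Y by rewrite h2 om1d.
split => //.
by rewrite h1 h4 h3.
Qed.
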